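(* Let $P$ be a finite poset and $q$ a positive integer. For every $f\in\mathrm{Inc}^q(P)$, $\mathrm{JdtPro}(f)\in\mathrm{Inc}^q(P)$.
   Context: $\mathrm{Inc}^q(P)$ is the set of $f:P\to\{1,\dots,q\}$ with $p_1<p_2\Rightarrow f(p_1)<f(p_2)$. For labelings $g:P\to\mathbb{Z}\cup\{\square\}$, the slide $\sigma_i$ is defined (simultaneously at all $x$, using the values of $g$) by $\sigma_i(g)(x)=i$ if $g(x)=\square$ and $g(y)=i$ for some $y\gtrdot x$; $\sigma_i(g)(x)=\square$ if $g(x)=i$ and $g(z)=\square$ for some $z\lessdot x$; $\sigma_i(g)(x)=g(x)$ otherwise. $\sigma_{a\to b}$ replaces every label $a$ by $b$. $jdt(f)=\sigma_{\square\to q+1}\circ\sigma_q\circ\cdots\circ\sigma_2\circ\sigma_{1\to\square}(f)$ and $\mathrm{JdtPro}(f)(x)=jdt(f)(x)-1$. *)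

(* Defs.v *)
From HB Require Import structures.
From mathcomp Require Import all_boot all_order all_algebra.
Set Implicit Arguments. Unset Strict Implicit. Unset Printing Implicit Defensive.
Import Order.TTheory GRing.Theory Num.Theory.

Section JdtPro.
Context {disp : Order.disp_t} {P : finPOrderType disp}.

Definition covers (x y : P) : bool :=
  ((x < y)%O && [forall z : P, ~~ ((x < z)%O && (z < y)%O)]).

Definition Inc (q : nat) (f : P -> int) : Prop :=
  (forall p : P, (1 <= f p)%R /\ (f p <= Posz q)%R) /\
  (forall p1 p2 : P, (p1 < p2)%O -> (f p1 < f p2)%R).

(* Labelings P -> Z ∪ {□}; the box □ is represented by None. *)
Definition labeling := P -> option int.

(* The slide σ_i, computed simultaneously at all x from the values of g. *)
Definition slide (i : int) (g : labeling) : labeling := fun x =>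
  if (g x == None) && [exists y : P, covers x y && (g y == Some i)] then Some i
  else if (g x == Some i) && [exists z : P, covers z x && (g z == None)] then None
  else g x.

Definition relabel (a b : option int) (g : labeling) : labeling := fun x =>
  if g x == a then b else g x.

(* σ_q ∘ ... ∘ σ_2 ∘ σ_{1 -> □}(f) : σ_2 is applied first. *)
Definition jdt_slides (q : nat) (f : P -> int) : labeling :=
  foldl (fun g (i : nat) => slide (Posz i) g)
        (relabel (Some 1%R) None (fun x => Some (f x)))
        (iota 2 q.-1).

(* jdt(f) = σ_{□ -> q+1}(...) : every remaining box becomes q+1; the result
   has no boxes, so it is an honest map P -> Z. *)
Definition jdt (q : nat) (f : P -> int) : P -> int := fun x =>
  odflt (Posz q.+1) (jdt_slides q f x).

Definition JdtPro (q : nat) (f : P -> int) : P -> int := fun x =>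
  (jdt q f x - 1)%R.

End JdtPro.

(* Main.v *)
Require Import Defs.
From mathcomp Require Import all_boot all_order all_algebra.
From mathcomp Require Import zify.
Import Order.TTheory GRing.Theory Num.Theory.

Section Aux.
Context {disp : Order.disp_t} {P : finPOrderType disp}.
Variable q : nat.

Definition vl (j : nat) (g : @labeling disp P) (x : P) : int :=
  match g x with None => Posz (2 * j + 1) | Some k => (2 * k)%R end.

Definition Inv (j : nat) (g : @labeling disp P) : Prop :=
  (forall x k, g x = Some k -> (2 <= k)%R /\ (k <= Posz q)%R) /\
  (forall p1 p2 : P, (p1 < p2)%O -> (vl j g p1 < vl j g p2)%R).

Lemma step (j : nat) (g : @labeling disp P) :
  (1 <= j)%N -> (j.+1 <= q)%N -> Inv j g -> Inv j.+1 (slide (Posz j.+1) g).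
Proof.
move=> h1 h2 [hr hm]; split.
  move=> x k; rewrite /slide.
  case: ifP => _; first by case=> <-; lia.
  case: ifP => _ //; exact: hr.
have key : forall x, let o := vl j g x in let n := vl j.+1 (slide (Posz j.+1) g) x in
  ((o != Posz (2*j+1)) && (o != Posz (2*j+2)) -> n = o) /\
  (o = Posz (2*j+1) \/ o = Posz (2*j+2) -> n = Posz (2*j+2) \/ n = Posz (2*j+3)).
  move=> x /=; rewrite /vl /slide.
  case E: (g x) => [k|] /=.
    case: (eqVneq k (Posz j.+1)) => [->|nk].
      case: ifP => _ /=;
      by split; [move/andP=>[/eqP ? /eqP ?]|move=> ?]; lia.
    have nk' : (Some k == Some (Posz j.+1)) = false by apply/negbTE; rewrite inj_eq //; exact: Some_inj.
    rewrite nk' /=.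
    by split=> // ?; move: nk => /eqP ?; lia.
  case: ifP => _ /=.
    by split; [move/andP=>[/eqP ? /eqP ?]|move=> ?]; lia.
  by split; [move/andP=>[/eqP ? /eqP ?]|move=> ?]; lia.
move=> p1 p2 lt12.
have o12 := hm _ _ lt12.
have [k1a k1b] := key p1; have [k2a k2b] := key p2.
move: k1a k1b k2a k2b o12 => /=.
set a := vl j g p1; set b := vl j g p2.
set n1 := vl j.+1 _ p1; set n2 := vl j.+1 _ p2.
move=> k1a k1b k2a k2b o12.
have [mid|notmid] := boolP ((a == Posz (2*j+1)) && (b == Posz (2*j+2))).
  case/andP: mid => /eqP ha /eqP hb.
  have g1 : g p1 = None.
    move: ha; rewrite /a /vl; case: (g p1) => // k ?; lia.
  have g2 : g p2 = Some (Posz j.+1).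
    move: hb; rewrite /b /vl; case: (g p2) => [k h|h]; [congr Some; lia|lia].
  have cov : covers p1 p2.
    rewrite /covers lt12 /=; apply/forallP => z; apply/negP => /andP [l1 l2].
    have := hm _ _ l1; have := hm _ _ l2; rewrite -/a -/b ha hb.
    rewrite /vl; case: (g z) => [k|]; lia.
  have e1 : n1 = Posz (2*j+2).
    rewrite /n1 /vl /slide g1 /=.
    have -> : [exists y, covers p1 y && (g y == Some (Posz j.+1))].
      by apply/existsP; exists p2; rewrite cov g2 eqxx.
    simpl; lia.
  have e2 : n2 = Posz (2*j+3).
    rewrite /n2 /vl /slide g2 /= eqxx /=.
    have -> : [exists z, covers z p2 && (g z == None)].
      by apply/existsP; exists p1; rewrite cov g1.
    simpl; lia.
  rewrite e1 e2; lia.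
have [c1|c1] := boolP ((a != Posz (2*j+1)) && (a != Posz (2*j+2)));
have [c2|c2] := boolP ((b != Posz (2*j+1)) && (b != Posz (2*j+2))).
- rewrite (k1a c1) (k2a c2); exact: o12.
- have := k1a c1; have : b = Posz (2*j+1) \/ b = Posz (2*j+2) by lia.
  move/k2b; lia.
- have pb : (exists k, b = 2 * k)%R \/ b = Posz (2*j+1).
    rewrite /b /vl; case: (g p2) => [k|]; [left; exists k|right] => //.
  have := k2a c2; have : a = Posz (2*j+1) \/ a = Posz (2*j+2) by lia.
  move/k1b; case: pb => [[kb ->]|]; lia.
- move: notmid; case: eqP => [ea|na]; case: eqP => [eb|nb] //= _; lia.
Qed.

Lemma fold_inv (n j : nat) (g : @labeling disp P) :
  (1 <= j)%N -> (j + n <= q)%N -> Inv j g ->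
  Inv (j + n) (foldl (fun g (i : nat) => slide (Posz i) g) g (iota j.+1 n)).
Proof.
elim: n j g => [|n IH] j g h1 h2 hI; first by rewrite addn0.
rewrite /= -addSnnS; apply: IH; first by lia.
  by lia.
by apply: step => //; lia.
Qed.

End Aux.

Theorem proposition3p4 (d : Order.disp_t) (P : finPOrderType d) (q : nat)
  (hq : (0 < q)%N) (f : P -> int) :
  Inc q f -> Inc q (JdtPro q f).
Proof.
move=> [fr fm].
set g0 := relabel (Some 1%R) None (fun x => Some (f x)).
have I0 : Inv q 1 g0.
  split.
    move=> x k; rewrite /g0 /relabel; case: eqP => // /eqP ne [<-].
    have [? ?] := fr x; split => //.
    move: ne; rewrite inj_eq; last exact: Some_inj.
    move/eqP => ?; lia.
  move=> p1 p2 lt; have := fm _ _ lt; have := fr p1; have := fr p2.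
  rewrite /vl /g0 /relabel.
  case: eqP => [[e1]|n1]; case: eqP => [[e2]|n2] => //=; try lia.
have IF : Inv q q (jdt_slides q f).
  have := @fold_inv d P q q.-1 1 g0 (leqnn 1) ltac:(lia) I0.
  by rewrite add1n prednK.
case: IF => hr hm; rewrite /Inc; split.
  move=> x; rewrite /JdtPro /jdt; case E: (jdt_slides q f x) => [k|] /=.
    have := hr _ _ E; lia.
  lia.
move=> p1 p2 lt; have := hm _ _ lt; rewrite /JdtPro /jdt /vl.
case E1: (jdt_slides q f p1) => [k1|]; case E2: (jdt_slides q f p2) => [k2|] /=.
- lia.
- have := hr _ _ E1; lia.
- have := hr _ _ E2; lia.
- lia.
Qed.
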